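(* Let $n_{0},k_{0},\Delta,\delta$ be nonnegative integers and define $$C_i=\binom{n_{0}+i\Delta}{k_0+i\delta},\qquad i=0,1,2,\ldots.$$ If $\Delta>\delta>0$ and $-1\leq k_0-(n_0+1)\delta/\Delta\leq0$, then the sequence $\{C_i\}_{i\geq0}$ is infinitely log-monotonic.
   Context: For a sequence $\{z_n\}$ of positive numbers, define the operator $R\{z_n\}=\{z_{n+1}/z_n\}$. A sequence of positive numbers $\{x_n\}$ is log-convex if $x_{n-1}x_{n+1}\ge x_n^2$ and log-concave if $x_{n-1}x_{n+1}\le x_n^2$, for all indices where these terms are defined. A sequence $\{z_n\}$ is log-monotonic of order $k$ if for every odd $r\le k-1$ the sequence $R^r\{z_n\}$ is log-concave and for every even $r\le k-1$ (including $r=0$) the sequence $R^r\{z_n\}$ is log-convex. It is infinitely log-monotonic if it is log-monotonic of order $k$ for every integer $k\ge0$. *)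

(* Defs.v *)
From HB Require Import structures.
From mathcomp Require Import all_boot all_order all_algebra.
From mathcomp Require Import reals.
Set Implicit Arguments. Unset Strict Implicit. Unset Printing Implicit Defensive.
Import Order.TTheory GRing.Theory Num.Theory.
Local Open Scope ring_scope.

Definition ratio_op (R : realType) (z : nat -> R) : nat -> R :=
  fun n => z n.+1 / z n.

Definition ratio_iter (R : realType) (r : nat) (z : nat -> R) : nat -> R :=
  iter r (@ratio_op R) z.

Definition positive_seq (R : realType) (x : nat -> R) : Prop :=
  forall n, 0 < x n.

(* x_{n-1} x_{n+1} >= x_n^2 for all n >= 1, written with shifted index *)
Definition log_convex (R : realType) (x : nat -> R) : Prop :=
  forall n, x n.+1 ^+ 2 <= x n * x n.+2.

Definition log_concave (R : realType) (x : nat -> R) : Prop :=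
  forall n, x n * x n.+2 <= x n.+1 ^+ 2.

Definition log_monotonic_of_order (R : realType) (k : nat) (z : nat -> R) : Prop :=
  forall r : nat, (r < k)%N ->
    (odd r -> log_concave (ratio_iter r z)) /\
    (~~ odd r -> log_convex (ratio_iter r z)).

Definition infinitely_log_monotonic (R : realType) (z : nat -> R) : Prop :=
  forall k : nat, log_monotonic_of_order k z.

(* Main.v *)
Require Import Defs.
From HB Require Import structures.
From mathcomp Require Import all_boot all_order all_algebra.
From mathcomp Require Import all_classical all_reals all_analysis.
From mathcomp Require Import ring lra zify.
Set Implicit Arguments. Unset Strict Implicit. Unset Printing Implicit Defensive.
Import Order.TTheory GRing.Theory Num.Theory.
Import numFieldNormedType.Exports.
Local Open Scope classical_set_scope.
Local Open Scope ring_scope.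

Section S.
Variable R : realType.

Definition dop (f : nat -> R) : nat -> R := fun n => f n.+1 - f n.
Definition fdiff (r : nat) (f : nat -> R) : nat -> R := iter r dop f.

Lemma fdiffS r f n : fdiff r.+1 f n = fdiff r f n.+1 - fdiff r f n.
Proof. by []. Qed.

Lemma fdiff_inv M n (y : R) : 0 < y ->
  fdiff M (fun i => (y + i%:R)^-1) n =
  (-1) ^+ M * M`!%:R / \prod_(k < M.+1) (y + (n + k)%:R).
Proof.
move=> y0; elim: M n => [|M IH] n.
  by rewrite /fdiff /= expr0 mul1r big_ord_recl big_ord0 mulr1 addn0 fact0 mul1r.
rewrite fdiffS !IH.
have pos m k : 0 < y + (m + k)%:R by rewrite ltr_wpDr.
have P0 m : \prod_(k < M.+1) (y + (m + k)%:R) != 0.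
  by rewrite prodf_seq_neq0; apply/allP => k _; rewrite gt_eqF.
have Q1 : \prod_(k < M.+2) (y + (n + k)%:R) =
   (y + n%:R) * \prod_(k < M.+1) (y + (n.+1 + k)%:R).
  by rewrite big_ord_recl addn0; congr (_ * _); apply: eq_bigr => k _; rewrite addSnnS.
have Q2 : \prod_(k < M.+2) (y + (n + k)%:R) =
   \prod_(k < M.+1) (y + (n + k)%:R) * (y + (n + M.+1)%:R).
  by rewrite big_ord_recr.
have hn : y + n%:R != 0 by rewrite gt_eqF // -[n]addn0 pos.
have hm : y + (n + M.+1)%:R != 0 by rewrite gt_eqF.
set a := \prod_(k < M.+1) (y + (n.+1 + k)%:R) in Q1 *.
set b := \prod_(k < M.+1) (y + (n + k)%:R) in Q2 *.
set q := \prod_(k < M.+2) (y + (n + k)%:R) in Q1 Q2 *.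
have qn : q != 0 by rewrite Q1 mulf_neq0 // /a P0.
have an : a != 0 by exact: P0.
have bn : b != 0 by exact: P0.
have ea : a^-1 = (y + n%:R) / q by rewrite Q1 invfM mulrA divff // mul1r.
have eb : b^-1 = (y + (n + M.+1)%:R) / q by rewrite Q2 invfM mulrCA divff // mulr1.
rewrite ea eb exprS factS natrM !natrD.
field.
exact: qn.
Qed.


Lemma fdiff_ln_derive M n (w : R) : 0 < w ->
  is_derive w 1 (fun v => fdiff M (fun i => ln (v + i%:R)) n)
    (fdiff M (fun i => (w + i%:R)^-1) n).
Proof.
move=> w0; elim: M n => [|M IH] n.
  have h1 : is_derive (w + n%:R) (1:R) (@ln R) (w + n%:R)^-1.
    by apply: is_derive1_ln; rewrite ltr_wpDr.
  have h2 : is_derive w (1:R) (shift (n%:R : R)) 1 by exact: is_derive_shift.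
  have := @is_derive1_comp R (@ln R) (shift (n%:R:R)) w _ _ h1 h2; rewrite mulr1.
  exact.
have := is_deriveB (IH n.+1) (IH n).
exact.
Qed.

Lemma fdiff_ln_mono M n (u v : R) : 0 < u -> u <= v ->
  (-1)^+M * fdiff M (fun i => ln (u + i%:R)) n <=
  (-1)^+M * fdiff M (fun i => ln (v + i%:R)) n.
Proof.
move=> u0; rewrite le_eqVlt => /orP[/eqP->//|uv].
pose F : R -> R := fun x => fdiff M (fun i => ln (x + i%:R)) n.
pose dF : R -> R := fun x => fdiff M (fun i => (x + i%:R)^-1) n.
have dFF x : x \in `]u, v[ -> is_derive x 1 F (dF x).
  by move=> /[!in_itv] /= /andP[ux _]; apply: fdiff_ln_derive; apply: lt_trans ux.
have cF : {within [set` `[u, v]%R], continuous F}.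
  apply: derivable_within_continuous => x /[!in_itv] /= /andP[ux _].
  by have [] := fdiff_ln_derive M n (lt_le_trans u0 ux).
have [c /[!in_itv] /= /andP[uc cv] E] := MVT uv dFF cF.
rewrite -subr_ge0 -mulrBr E /dF fdiff_inv; last exact: lt_trans uc.
rewrite mulrA [X in X * (v - u)]mulrA signrMK.
idtac.
apply: mulr_ge0; last by rewrite subr_ge0 ltW.
apply: divr_ge0; first exact: ler0n.
apply: prodr_ge0 => k _; apply: addr_ge0 => //; apply: ltW; exact: lt_trans uc.
Qed.

Lemma fdiff_ext r f g : (forall i, f i = g i) -> forall n, fdiff r f n = fdiff r g n.
Proof. by move=> fg; elim: r => [|r IH] n; [exact: fg|rewrite !fdiffS !IH]. Qed.

Lemma fdiffD r f g n : fdiff r (fun i => f i + g i) n = fdiff r f n + fdiff r g n.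
Proof.
elim: r n => [|r IH] n //; rewrite !fdiffS !IH; lra.
Qed.

Lemma fdiffN r f n : fdiff r (fun i => - f i) n = - fdiff r f n.
Proof. elim: r n => [|r IH] n //; rewrite !fdiffS !IH; lra. Qed.

Lemma fdiffB r f g n : fdiff r (fun i => f i - g i) n = fdiff r f n - fdiff r g n.
Proof. by rewrite fdiffD fdiffN. Qed.

Lemma fdiff_cst r c n : fdiff r.+1 (fun _ => c) n = 0.
Proof. elim: r n => [|r IH] n; first by rewrite fdiffS /= subrr. by rewrite fdiffS !IH subrr. Qed.

Lemma fdiff_sum r m (F : 'I_m -> nat -> R) n :
  fdiff r (fun i => \sum_(j < m) F j i) n = \sum_(j < m) fdiff r (F j) n.
Proof. elim: r n => [|r IH] n //; by rewrite fdiffS !IH -sumrB. Qed.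

Lemma ratio_ln (z : nat -> R) : (forall n, 0 < z n) -> forall r,
  (forall n, 0 < ratio_iter r z n) /\ (forall n, ln (ratio_iter r z n) = fdiff r (fun i => ln (z i)) n).
Proof.
move=> zp; elim=> [|r [IHp IHl]]; first by split.
split=> n; rewrite /ratio_iter iterS -/(ratio_iter r z) /ratio_op.
  exact: divr_gt0.
by rewrite ln_div ?posrE // !IHl.
Qed.

Lemma lcvx (x : nat -> R) : (forall n, 0 < x n) ->
  (forall n, 0 <= fdiff 2 (fun i => ln (x i)) n) -> log_convex x.
Proof.
move=> xp h n; have := h n; rewrite !fdiffS /fdiff /= => hn.
rewrite -ler_ln ?posrE ?exprn_gt0 ?mulr_gt0 // lnXn // lnM ?posrE //.
lra.
Qed.

Lemma lccv (x : nat -> R) : (forall n, 0 < x n) ->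
  (forall n, fdiff 2 (fun i => ln (x i)) n <= 0) -> log_concave x.
Proof.
move=> xp h n; have := h n; rewrite !fdiffS /fdiff /= => hn.
rewrite -ler_ln ?posrE ?exprn_gt0 ?mulr_gt0 // lnXn // lnM ?posrE //.
lra.
Qed.

Lemma ln_factD N m : ln ((N + m)`!%:R : R) = ln (N`!%:R) + \sum_(j < m) ln ((N + j.+1)%:R).
Proof.
elim: m => [|m IH]; first by rewrite addn0 big_ord0 addr0.
rewrite addnS factS natrM lnM ?posrE ?ltr0n ?fact_gt0 // IH big_ord_recr /= -addnS.
lra.
Qed.

Lemma ln_bin N K : (K <= N)%N ->
  ln ('C(N, K)%:R : R) = ln (N`!%:R) - ln (K`!%:R) - ln ((N - K)`!%:R).
Proof.
move=> KN; rewrite -(bin_fact KN) !natrM !lnM ?posrE ?ltr0n ?fact_gt0 ?bin_gt0 ?muln_gt0 //.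
lra.
Qed.

Lemma ln_scale (a i c s D : nat) : (0 < a)%N -> (0 < c)%N -> (0 < s)%N -> D = (c * s)%N ->
  ln ((a + i * c)%:R : R) = ln (c%:R) + ln ((a * s)%:R / D%:R + i%:R).
Proof.
move=> a0 c0 s0 ->.
have cn : (c%:R : R) != 0 by rewrite pnatr_eq0 -lt0n.
have sn : (s%:R : R) != 0 by rewrite pnatr_eq0 -lt0n.
rewrite -lnM ?posrE ?ltr0n //; last first.
  by rewrite ltr_wpDr // divr_gt0 // ltr0n muln_gt0 ?a0 ?s0 ?c0.
congr ln; rewrite !natrM natrD natrM; field.
by rewrite cn sn.
Qed.

Lemma exmax (s : seq nat) : s != [::] -> exists2 m, m \in s & all (fun x => (x <= m)%N) s.
Proof.
elim: s => [//|x s IH] _.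
case: (eqVneq s [::]) => [->|sn].
  by exists x; rewrite ?mem_seq1 //= leqnn.
have [m ms am] := IH sn.
exists (maxn x m).
  by rewrite /maxn; case: ltnP => _; rewrite inE ?ms ?orbT ?eqxx.
rewrite /= leq_maxl /=; apply/allP => y ys; rewrite leq_max (allP am) ?orbT //.
Qed.

Lemma dom_sum (F : nat -> R) (U V : seq nat) :
  (forall a b, (0 < a)%N -> (a <= b)%N -> F b <= F a) ->
  all (fun x => 0 < x)%N U -> size U = size V ->
  (forall t, count (fun x => x <= t)%N V <= count (fun x => x <= t)%N U)%N ->
  \sum_(x <- V) F x <= \sum_(x <- U) F x.
Proof.
move=> Fm; move eqn : (size V) => n.
elim: n U V eqn => [|n IH] U V sV Up sU cnt.
  by move/eqP: sV; rewrite size_eq0 => /eqP ->; move/eqP: sU; rewrite size_eq0 => /eqP ->; rewrite !big_nil.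
have Vn : V != [::] by rewrite -size_eq0 sV.
have Un : U != [::] by rewrite -size_eq0 sU.
have [vm vmV avm] := exmax Vn.
have [um umU aum] := exmax Un.
have umvm : (um <= vm)%N.
  have h := cnt vm.
  have cV : count (fun x => x <= vm)%N V = size V by apply/eqP; rewrite -all_count.
  rewrite cV sV -sU in h.
  have : all (fun x => x <= vm)%N U by rewrite all_count eqn_leq count_size h.
  by move/allP/(_ _ umU).
have pU := perm_to_rem umU; have pV := perm_to_rem vmV.
rewrite (perm_big _ pU) (perm_big _ pV) !big_cons.
apply: lerD; first by apply: Fm => //; exact: (allP Up).
apply: IH.
- by rewrite size_rem // sV.
- by apply/allP => x /mem_rem xU; exact: (allP Up).
- by rewrite size_rem // sU.
move=> t; have cU := (permP pU) (fun x => x <= t)%N; have cV := (permP pV) (fun x => x <= t)%N.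
move: cU cV; rewrite /= => cU cV.
case: (leqP um t) => umt.
  have -> : count (fun x => x <= t)%N (rem um U) = size (rem um U).
    apply/eqP; rewrite -all_count; apply/allP => x /mem_rem xU.
    exact: leq_trans (allP aum x xU) umt.
  by rewrite (size_rem umU) sU -sV -(size_rem vmV) count_size.
have := cnt t; rewrite cU cV /=; rewrite (leqNgt um t) umt /= add0n.

move=> h; apply: leq_trans h; exact: leq_addl.
Qed.
End S.
Local Close Scope ring_scope.
Lemma count_lt_iota K N : count (fun j => j < K) (iota 0 N) = minn K N.
Proof.
elim: N => [|N IH]; first by rewrite /= minn0.
by rewrite -addn1 iotaD count_cat IH /= add0n addn0; lia.
Qed.

Lemma count_iota_le a c t N : 0 < c ->
  count (fun j => (a + j.+1) * c <= t) (iota 0 N) = minn (t %/ c - a) N.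
Proof.
move=> c0; rewrite -count_lt_iota; apply: eq_count => j.
by rewrite -leq_divRL // ltn_subRL addnS.
Qed.

Lemma key_nat n0 k0 d e t : 0 < d -> 0 < e ->
  k0 * (d + e) <= n0.+1 * d -> n0.+1 * d <= k0.+1 * (d + e) ->
  minn (t %/ ((d + e) * e) - k0) d + minn (t %/ ((d + e) * d) - (n0 - k0)) e
  <= minn (t %/ (d * e) - n0) (d + e).
Proof.
move=> d0 e0 h1 h2.
have kn : k0 <= n0.
  have : k0 * (d + e) < n0.+1 * (d + e).
    by apply: (leq_ltn_trans h1); rewrite ltn_pmul2l //; lia.
  by rewrite ltn_pmul2r; [lia|lia].
set A := t %/ ((d + e) * e); set B := t %/ ((d + e) * d); set C := t %/ (d * e).
have hA : A * ((d + e) * e) <= t by apply: leq_divM.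
have hB : B * ((d + e) * d) <= t by apply: leq_divM.
have hAB : A + B <= C.
  rewrite /C leq_divRL; last by rewrite muln_gt0 d0 e0.
  rewrite -(@leq_pmul2r (d + e)); last lia.
  have e1 : (A + B) * (d * e) * (d + e) = A * ((d + e) * e) * d + B * ((d + e) * d) * e.
    timeout 10 ring.
  rewrite e1 mulnDr.
  by apply: leq_add; apply: leq_mul.
have c1 : k0 < A -> n0 - k0 <= B.
  move=> kA; rewrite /B leq_divRL; last by rewrite !muln_gt0 ?addn_gt0 d0 e0.
  apply: leq_trans hA.
  apply: (@leq_trans (k0.+1 * ((d + e) * e))); last by apply: leq_mul.
  have : (n0 - k0) * d <= k0.+1 * e.
    clear -h2; move: h2; rewrite mulnBl !mulSn !mulnDr; lia.
  move=> h; rewrite [X in X <= _]mulnCA [X in _ <= X]mulnCA leq_mul2l h orbT //.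
have c2 : n0 - k0 < B -> k0 <= A.
  move=> kB; rewrite /A leq_divRL; last by rewrite !muln_gt0 ?addn_gt0 d0 e0.
  apply: leq_trans hB.
  apply: (@leq_trans ((n0 - k0).+1 * ((d + e) * d))); last by apply: leq_mul.
  have : k0 * e <= (n0 - k0).+1 * d.
    clear -h1 kn; move: h1; rewrite !mulSn mulnBl !mulnDr; lia.
  move=> h; rewrite [X in X <= _]mulnCA [X in _ <= X]mulnCA leq_mul2l h orbT //.
clearbody A B C; clear hA hB h1 h2; lia.
Qed.

Local Open Scope ring_scope.
Lemma fdiff_cstD (R : realType) r (c : R) (f : nat -> R) n :
  fdiff r.+1 (fun i => c + f i) n = fdiff r.+1 f n.
Proof. by rewrite fdiffD fdiff_cst add0r. Qed.

Lemma sum_map_iota (R : realType) m (g : nat -> nat) (F : nat -> R) :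
  \sum_(j < m) F (g j) = \sum_(x <- [seq g j | j <- iota 0 m]) F x.
Proof. by rewrite big_map -[in RHS](subn0 m) -/(index_iota 0 m) big_mkord. Qed.

Lemma count_map_le a c t N : (0 < c)%N ->
  count (fun x => x <= t)%N [seq (a + j.+1) * c | j <- iota 0 N]%N = minn (t %/ c - a) N.
Proof. by move=> c0; rewrite count_map; exact: count_iota_le. Qed.

Theorem corollary3p3 (R : realType) (n0 k0 Delta delta : nat) :
  (0 < delta)%N -> (delta < Delta)%N ->
  -1 <= (k0%:R : R) - (n0.+1)%:R * delta%:R / Delta%:R <= 0 ->
  positive_seq (fun i : nat => ('C(n0 + i * Delta, k0 + i * delta))%:R : R) /\
  infinitely_log_monotonic
    (fun i : nat => ('C(n0 + i * Delta, k0 + i * delta))%:R : R).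
Proof.
move=> d0 dD /andP[h1 h2].
have [e De] : exists e : nat, Delta = (delta + e)%N by exists (Delta - delta)%N; rewrite subnKC // ltnW.
have e0 : (0 < e)%N by move: dD; rewrite De; lia.
subst Delta.
have Dp : (0 : R) < (delta + e)%:R by rewrite ltr0n addn_gt0 d0.
have hk1 : (k0 * (delta + e) <= n0.+1 * delta)%N.
  rewrite -(ler_nat R) !natrM; move: h2; rewrite subr_le0 ler_pdivlMr //.
have hk2 : (n0.+1 * delta <= k0.+1 * (delta + e))%N.
  rewrite -(ler_nat R) !natrM -[k0.+1%:R]natr1.
  have : (n0.+1)%:R * delta%:R / (delta + e)%:R <= k0%:R + (1 : R) by lra.
  by move=> h; rewrite -ler_pdivrMr //.
have kn : (k0 <= n0)%N.
  have : (k0 * (delta + e) < n0.+1 * (delta + e))%N.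
    by apply: (leq_ltn_trans hk1); rewrite ltn_pmul2l //; lia.
  by rewrite ltn_pmul2r; [lia|lia].
have Kle i : (k0 + i * delta <= n0 + i * (delta + e))%N.
  by apply: leq_add => //; apply: leq_mul (leqnn i) (leq_addr _ _).
pose z := fun i : nat => ('C(n0 + i * (delta + e), k0 + i * delta))%:R : R.
have zp : forall n, 0 < z n by move=> n; rewrite /z ltr0n bin_gt0 Kle.
split => //.
pose L := fun i => ln (z i).
pose D := ((delta + e) * (delta * e))%N.
have Dgt0 : (0 : R) < D%:R by rewrite ltr0n /D !muln_gt0 addn_gt0 d0 e0.
have G i : dop L i =
   \sum_(j < delta + e) (ln ((delta + e)%:R) + ln (((n0 + j.+1) * (delta * e))%:R / D%:R + i%:R))
 - \sum_(j < delta) (ln (delta%:R) + ln (((k0 + j.+1) * ((delta + e) * e))%:R / D%:R + i%:R))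
 - \sum_(j < e) (ln (e%:R) + ln (((n0 - k0 + j.+1) * ((delta + e) * delta))%:R / D%:R + i%:R)).
  rewrite /dop /L /z (ln_bin _ (Kle i.+1)) (ln_bin _ (Kle i)).
  have eN : (n0 + i.+1 * (delta + e) = (n0 + i * (delta + e)) + (delta + e))%N.
    by rewrite mulSn; lia.
  have eK : (k0 + i.+1 * delta = (k0 + i * delta) + delta)%N by rewrite mulSn; lia.
  have eNK : (n0 + i.+1 * (delta + e) - (k0 + i.+1 * delta) =
     (n0 + i * (delta + e) - (k0 + i * delta)) + e)%N.
    by clear -kn; rewrite !mulSn !mulnDr; lia.
  rewrite eNK eN eK !ln_factD.
  have E0 : \sum_(j < delta + e) ln ((n0 + i * (delta + e) + j.+1)%:R : R) =
     \sum_(j < delta + e) (ln ((delta + e)%:R) + ln (((n0 + j.+1) * (delta * e))%:R / D%:R + i%:R)).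
    apply: eq_bigr => j _.
    rewrite (_ : (n0 + i * (delta + e) + j.+1 = (n0 + j.+1) + i * (delta + e))%N); last lia.
    by apply: ln_scale => //; rewrite ?addn_gt0 ?d0 ?muln_gt0 ?d0 ?e0 ?orbT.
  have E1 : \sum_(j < delta) ln ((k0 + i * delta + j.+1)%:R : R) =
     \sum_(j < delta) (ln (delta%:R) + ln (((k0 + j.+1) * ((delta + e) * e))%:R / D%:R + i%:R)).
    apply: eq_bigr => j _.
    rewrite (_ : (k0 + i * delta + j.+1 = (k0 + j.+1) + i * delta)%N); last lia.
    apply: ln_scale => //; rewrite ?addn_gt0 ?muln_gt0 ?addn_gt0 ?d0 ?e0 ?orbT //.
    by rewrite /D mulnCA.
  have E2 : \sum_(j < e) ln ((n0 + i * (delta + e) - (k0 + i * delta) + j.+1)%:R : R) =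
     \sum_(j < e) (ln (e%:R) + ln (((n0 - k0 + j.+1) * ((delta + e) * delta))%:R / D%:R + i%:R)).
    apply: eq_bigr => j _.
    rewrite (_ : (n0 + i * (delta + e) - (k0 + i * delta) + j.+1 = (n0 - k0 + j.+1) + i * e)%N); last first.
      by clear -kn; rewrite !mulnDr; lia.
    apply: ln_scale => //; rewrite ?addn_gt0 ?muln_gt0 ?addn_gt0 ?d0 ?e0 ?orbT //.
    by rewrite /D [(delta * e)%N]mulnC mulnCA.
  rewrite E0 E1 E2; lra.
have KEY : forall r n, 0 <= (-1) ^+ r * fdiff r.+2 L n.
  move=> r n.
  have -> : fdiff r.+2 L n = fdiff r.+1 (dop L) n by rewrite /fdiff iterSr.
  have cstS : forall m (c : R) (g : 'I_m -> nat -> R),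
      \sum_(j < m) fdiff r.+1 (fun i => c + g j i) n = \sum_(j < m) fdiff r.+1 (g j) n.
    by move=> m c g; apply: eq_bigr => j _; exact: fdiff_cstD.
  rewrite (fdiff_ext _ G) !fdiffB.
  rewrite !fdiff_sum !cstS !mulrBr !mulr_sumr.
  pose gu := fun j : nat => ((n0 + j.+1) * (delta * e))%N.
  pose gx := fun j : nat => ((k0 + j.+1) * ((delta + e) * e))%N.
  pose gy := fun j : nat => ((n0 - k0 + j.+1) * ((delta + e) * delta))%N.
  pose F := fun a : nat => ((-1) ^+ r * fdiff r.+1 (fun i => ln (a%:R / D%:R + i%:R)) n : R).
  change (0 <= \sum_(j < delta + e) F (gu j) - \sum_(j < delta) F (gx j) - \sum_(j < e) F (gy j)).
  suff HS : \sum_(j < delta) F (gx j) + \sum_(j < e) F (gy j) <= \sum_(j < delta + e) F (gu j).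
    by lra.
  rewrite !sum_map_iota -big_cat.
  apply: dom_sum.
  - move=> a b a0 ab; rewrite /F.
    have hu : (0 : R) < a%:R / D%:R by rewrite divr_gt0 // ltr0n.
    have huv : (a%:R / D%:R : R) <= b%:R / D%:R.
      by rewrite ler_pM2r ?invr_gt0 // ler_nat.
    have := fdiff_ln_mono r.+1 n hu huv.
    by rewrite exprS mulN1r !mulNr lerN2.
  - apply/allP => x /mapP [j _ ->]; rewrite /gu muln_gt0 !muln_gt0 d0 e0 addn_gt0 ltnS orbT.
    done.
  - by rewrite size_cat !size_map !size_iota.
  move=> t; rewrite count_cat /gu /gx /gy !count_map_le ?muln_gt0 ?addn_gt0 ?d0 ?e0 //.
  exact: key_nat.
move=> k r _.
have [rp rl] := ratio_ln zp r.
have E n : fdiff 2 (fun i => ln (ratio_iter r z i)) n = fdiff r.+2 L n.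
  by rewrite (fdiff_ext 2 rl) /fdiff -iterD.
split => hodd.
  apply: lccv => // n; rewrite E; have := KEY r n.
  by rewrite -signr_odd hodd expr1 mulN1r oppr_ge0.
apply: lcvx => // n; rewrite E; have := KEY r n.
by rewrite -signr_odd (negbTE hodd) expr0 mul1r.
Qed.
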